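(* Let $\pi\colon\mathsf{States}\to\mathbb{R}_{\ge0}$ be a potential function and let $C$ be a program. Then: (1) (mut) $\mathsf{aert}_\pi[\![\langle e\rangle:=e']\!]([e\mapsto e']-\pi)\preceq[e\mapsto-]-\pi$; (2) (lkp) $\mathsf{aert}_\pi[\![x:=\langle e\rangle]\!]\big(([x=z\wedge\mathsf{emp}]\oplus[e[x/y]\mapsto z])-\pi\big)\preceq([x=y\wedge\mathsf{emp}]\oplus[e\mapsto z])-\pi$; (3) (alc) if $x$ does not occur in $e$, then $\mathsf{aert}_\pi[\![x:=\mathtt{alloc}(e)]\!]\big(\bigoplus_{i=1}^{e}[x+i-1\mapsto 0]-\pi\big)\preceq[\mathsf{emp}]-\pi$; (4) (aux) for all $f,g\in\mathbb{T}$ and every variable $y$ not occurring in $C$: $\mathsf{aert}_\pi[\![C]\!](f-\pi)\preceq g-\pi$ implies $\mathsf{aert}_\pi[\![C]\!](-\pi+\inf y\colon f)\preceq-\pi+\inf y\colon g$.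
   Context: States and programs. Fix a finite set $\mathrm{Vars}$ of variables; values are $\mathbb{N}$, locations are $\mathbb{N}_{>0}$. A stack is $s\colon \mathrm{Vars}\to\mathbb{N}$; a heap is a partial map $h$ from a finite set $\mathrm{dom}(h)\subseteq\mathbb{N}_{>0}$ to $\mathbb{N}$. $h_1\perp h_2$ means disjoint domains; then $h_1\star h_2$ is their union; $h_\emptyset$ is the empty heap. $\mathsf{States}$ is the set of pairs $(s,h)$. $s(e)$ is the value of a (heap-independent) arithmetic expression $e$ under $s$, $s\models\varphi$ means the Boolean expression $\varphi$ holds under $s$, $s[x\mapsto v]$ is the updated stack; $e[x/y]$ is syntactic substitution of variable $y$ for $x$ in $e$. Programs are generated by $C ::= \mathtt{tick}(e) \mid x:=e \mid x:=\mathtt{alloc}(e) \mid \langle e\rangle:=e' \mid x:=\langle e\rangle \mid \mathtt{free}(e) \mid \{C\}[p]\{C\} \mid \mathtt{if}(\varphi)\{C\}\mathtt{else}\{C\} \mid C;C \mid \mathtt{while}(\varphi)\{C\}$, where $p$ is an expression with $s(p)\in[0,1]\cap\mathbb{Q}$ for all $s$. The statements other than tick, probabilistic choice, conditional, sequencing and loops are called atomic. Runtimes. $\mathbb{T}$ is the set of functions $\mathsf{States}\to[0,\infty]$, ordered pointwise by $\preceq$; arithmetic is pointwise with $0\cdot\infty=0$. $[\varphi]$ is the $0/1$-valued Iverson bracket. Truncated subtraction: $a\dot- b=\max(a-b,0)$, $\infty\dot- b=\infty$ for finite $b$, $a\dot-\infty=0$. $(f\oplus g)(s,h)=\min\{f(s,h_1)+g(s,h_2)\mid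 h=h_1\star h_2\}$; $(f \mathbin{-\!\!\ominus} g)(s,h)=\sup\{g(s,h\star h')\dot- f(s,h')\mid h'\perp h\}$; $(\inf y\colon f)(s,h)=\inf_{v\in\mathbb{N}} f(s[y\mapsto v],h)$, $(\sup y\colon f)(s,h)=\sup_{v\in\mathbb{N}}f(s[y\mapsto v],h)$; $f[x/e](s,h)=f(s[x\mapsto s(e)],h)$. Atomic ($0/\infty$-valued) runtimes: $[\mathsf{emp}](s,h)=0$ if $h=h_\emptyset$, else $\infty$; $[\varphi\wedge\mathsf{emp}](s,h)=0$ if $s\models\varphi$ and $h=h_\emptyset$, else $\infty$; $\mathsf{tm}(e)(s,h)=s(e)$ if $h=h_\emptyset$, else $\infty$; $[e\mapsto e'](s,h)=0$ if $\mathrm{dom}(h)=\{s(e)\}$ and $h(s(e))=s(e')$, else $\infty$; $[e\mapsto -](s,h)=0$ if $\mathrm{dom}(h)=\{s(e)\}$, else $\infty$; $\bigoplus_{i=1}^{e} f_i$ is the separating sum over $i=1,\dots,s(e)$ (empty one: $[\mathsf{emp}]$). $\mathsf{ert}[\![C]\!]\colon\mathbb{T}\to\mathbb{T}$ (with $v$ fresh): $\mathsf{ert}[\![\mathtt{tick}(e)]\!](f)=\mathsf{tm}(e)\oplus f$; $\mathsf{ert}[\![x:=e]\!](f)=f[x/e]$; $\mathsf{ert}[\![x:=\mathtt{alloc}(e)]\!](f)=\sup v\colon (\bigoplus_{i=1}^{e}[v+i-1\mapsto 0])\mathbin{-\!\!\ominus} f[x/v]$; $\mathsf{ert}[\![\langle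 e\rangle:=e']\!](f)=[e\mapsto-]\oplus([e\mapsto e']\mathbin{-\!\!\ominus} f)$; $\mathsf{ert}[\![x:=\langle e\rangle]\!](f)=\inf v\colon [e\mapsto v]\oplus([e\mapsto v]\mathbin{-\!\!\ominus} f[x/v])$; $\mathsf{ert}[\![\mathtt{free}(e)]\!](f)=[e\mapsto-]\oplus f$; $\mathsf{ert}[\![C_1;C_2]\!](f)=\mathsf{ert}[\![C_1]\!](\mathsf{ert}[\![C_2]\!](f))$; conditional: $[\varphi]\cdot\mathsf{ert}[\![C_1]\!](f)+[\neg\varphi]\cdot\mathsf{ert}[\![C_2]\!](f)$; probabilistic choice: $p\cdot\mathsf{ert}[\![C_1]\!](f)+(1-p)\cdot\mathsf{ert}[\![C_2]\!](f)$; $\mathsf{ert}[\![\mathtt{while}(\varphi)\{C\}]\!](f)=\mathrm{lfp}\, g.\ [\neg\varphi]\cdot f+[\varphi]\cdot\mathsf{ert}[\![C]\!](g)$. Amortized runtimes. A potential function is $\pi\colon\mathsf{States}\to\mathbb{R}_{\ge0}$. $\mathbb{A}_\pi=\{X\colon\mathsf{States}\to\mathbb{R}\cup\{\infty\}\mid -\pi\le X\}$, ordered pointwise (complete lattice, least element $-\pi$). $\mathsf{aert}_\pi[\![C]\!]\colon\mathbb{A}_\pi\to\mathbb{A}_\pi$: $\mathsf{aert}_\pi[\![\mathtt{tick}(e)]\!](X)=e+X$; for atomic $C$ other than tick, $\mathsf{aert}_\pi[\![C]\!](X)=\mathsf{ert}[\![C]\!](X+\pi)-\pi$; sequencing by composition;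 conditional $[\varphi]\cdot\mathsf{aert}_\pi[\![C_1]\!](X)+[\neg\varphi]\cdot\mathsf{aert}_\pi[\![C_2]\!](X)$; probabilistic choice $p\cdot\mathsf{aert}_\pi[\![C_1]\!](X)+(1-p)\cdot\mathsf{aert}_\pi[\![C_2]\!](X)$; $\mathsf{aert}_\pi[\![\mathtt{while}(\varphi)\{C'\}]\!](X)=\mathrm{lfp}\,Y.\ [\neg\varphi]\cdot X+[\varphi]\cdot\mathsf{aert}_\pi[\![C']\!](Y)$ in $(\mathbb{A}_\pi,\preceq)$. *)

(* Defs.v *)
From HB Require Import structures.
From mathcomp Require Import all_boot all_order all_algebra.
From mathcomp Require Import all_classical all_reals ereal.
Set Implicit Arguments. Unset Strict Implicit. Unset Printing Implicit Defensive.
Import Order.TTheory GRing.Theory Num.Theory.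
Local Open Scope classical_set_scope.
Local Open Scope ring_scope.
Local Open Scope ereal_scope.

Section States.
Context (V : finType).

Definition stack := V -> nat.

Record heap := Heap {
  hval : nat -> option nat;
  hval0 : hval 0 = None;
  hfin : exists b, forall l, (b < l)%N -> hval l = None }.

Definition state := (stack * heap)%type.

Definition upd (s : stack) (x : V) (v : nat) : stack :=
  fun y => if y == x then v else s y.

Definition hsplit (h h1 h2 : heap) : Prop :=
  (forall l, hval h1 l = None \/ hval h2 l = None) /\
  (forall l, hval h l = match hval h1 l with Some w => Some w | None => hval h2 l end).

Definition hempty (h : heap) : Prop := forall l, hval h l = None.

Definition aexp := stack -> nat.
Definition bexp := stack -> bool.
Record pexp := PExp {
  pfun : stack -> rat;
  pfun_ge0 : forall s, (0 <= pfun s)%R;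
  pfun_le1 : forall s, (pfun s <= 1)%R }.

(* e[x/y]: substitute variable y for x in e *)
Definition asubst (e : aexp) (x y : V) : aexp := fun s => e (upd s x (s y)).

(* "x does not occur in e" (semantic rendering: e does not depend on x) *)
Definition a_indep (x : V) (e : aexp) : Prop := forall s v, e (upd s x v) = e s.
Definition b_indep (x : V) (b : bexp) : Prop := forall s v, b (upd s x v) = b s.
Definition p_indep (x : V) (p : pexp) : Prop := forall s v, pfun p (upd s x v) = pfun p s.

Inductive cmd :=
| Tick of aexp
| Assign of V & aexp
| Alloc of V & aexp
| Store of aexp & aexp
| Lookup of V & aexp
| Free of aexp
| PChoice of cmd & pexp & cmd
| Ite of bexp & cmd & cmd
| Seq of cmd & cmd
| While of bexp & cmd.

Fixpoint notin_cmd (y : V) (C : cmd) : Prop :=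
  match C with
  | Tick e => a_indep y e
  | Assign x e => x <> y /\ a_indep y e
  | Alloc x e => x <> y /\ a_indep y e
  | Store e e' => a_indep y e /\ a_indep y e'
  | Lookup x e => x <> y /\ a_indep y e
  | Free e => a_indep y e
  | PChoice C1 p C2 => notin_cmd y C1 /\ p_indep y p /\ notin_cmd y C2
  | Ite b C1 C2 => b_indep y b /\ notin_cmd y C1 /\ notin_cmd y C2
  | Seq C1 C2 => notin_cmd y C1 /\ notin_cmd y C2
  | While b C1 => b_indep y b /\ notin_cmd y C1
  end.

End States.

Section Runtimes.
Context {R : realType} {V : finType}.

Definition rt := state V -> \bar R.

Definition rle (f g : rt) : Prop := forall st, f st <= g st.

Definition iv (b : bool) : \bar R := if b then 1 else 0.

Definition tsub (a b : \bar R) : \bar R :=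
  if b == +oo then 0 else if a == +oo then +oo
  else if a - b < 0 then 0 else a - b.

Definition sepcon (f g : rt) : rt := fun st =>
  ereal_inf [set r | exists h1 h2, hsplit st.2 h1 h2 /\
                        r = f (st.1, h1) + g (st.1, h2)].

Definition septo (f g : rt) : rt := fun st =>
  ereal_sup [set r | exists h' h'', hsplit h'' st.2 h' /\
                        r = tsub (g (st.1, h'')) (f (st.1, h'))].

Definition inf_var (y : V) (f : rt) : rt := fun st =>
  ereal_inf [set f (upd st.1 y v, st.2) | v in [set: nat]].
Definition sup_var (y : V) (f : rt) : rt := fun st =>
  ereal_sup [set f (upd st.1 y v, st.2) | v in [set: nat]].

Definition subst_rt (f : rt) (x : V) (e : aexp V) : rt :=
  fun st => f (upd st.1 x (e st.1), st.2).

Definition atom (P : state V -> Prop) : rt := fun st => if `[< P st >] then 0 else +oo.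
Definition emp : rt := atom (fun st => hempty st.2).
Definition andemp (b : bexp V) : rt := atom (fun st => b st.1 /\ hempty st.2).
Definition tm (e : aexp V) : rt :=
  fun st => if `[< hempty st.2 >] then ((e st.1)%:R)%:E else +oo.
Definition pto (e e' : aexp V) : rt :=
  atom (fun st => forall l, hval st.2 l = if l == e st.1 then Some (e' st.1) else None).
Definition pto_any (e : aexp V) : rt :=
  atom (fun st => exists w, forall l, hval st.2 l = if l == e st.1 then Some w else None).

Fixpoint bigsep (k : nat) (F : nat -> rt) : rt :=
  match k with
  | 0 => emp
  | k'.+1 => sepcon (bigsep k' F) (F k'.+1)
  end.
Definition sepsum (n : aexp V) (F : nat -> rt) : rt := fun st => bigsep (n st.1) F st.

Definition lfpT (Phi : rt -> rt) : rt := fun st =>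
  ereal_inf [set Y st | Y in [set Y : rt | (forall st', 0 <= Y st') /\ rle (Phi Y) Y]].

Definition cst (v : nat) : aexp V := fun _ => v.

Fixpoint ert (C : cmd V) (f : rt) : rt :=
  match C with
  | Tick e => sepcon (tm e) f
  | Assign x e => subst_rt f x e
  | Alloc x e => fun st =>
      ereal_sup [set septo (sepsum e (fun i => pto (cst (v + i - 1)) (cst 0)))
                           (subst_rt f x (cst v)) st | v in [set: nat]]
  | Store e e' => sepcon (pto_any e) (septo (pto e e') f)
  | Lookup x e => fun st =>
      ereal_inf [set sepcon (pto e (cst v)) (septo (pto e (cst v)) (subst_rt f x (cst v))) st
                | v in [set: nat]]
  | Free e => sepcon (pto_any e) f
  | PChoice C1 p C2 => fun st =>
      (ratr (pfun p st.1))%:E * ert C1 f st + (1 - ratr (pfun p st.1))%:E * ert C2 f st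
  | Ite b C1 C2 => fun st =>
      iv (b st.1) * ert C1 f st + iv (~~ b st.1) * ert C2 f st
  | Seq C1 C2 => ert C1 (ert C2 f)
  | While b C1 => lfpT (fun g st => iv (~~ b st.1) * f st + iv (b st.1) * ert C1 g st)
  end.

Section Amortized.
Context (pi : state V -> R).

Definition minus_pi (f : rt) : rt := fun st => f st - (pi st)%:E.

Definition lfpA (Phi : rt -> rt) : rt := fun st =>
  ereal_inf [set Y st | Y in [set Y : rt |
     (forall st', - (pi st')%:E <= Y st') /\ rle (Phi Y) Y]].

Fixpoint aert (C : cmd V) (X : rt) : rt :=
  match C with
  | Tick e => fun st => ((e st.1)%:R)%:E + X st
  | PChoice C1 p C2 => fun st =>
      (ratr (pfun p st.1))%:E * aert C1 X st + (1 - ratr (pfun p st.1))%:E * aert C2 X st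
  | Ite b C1 C2 => fun st =>
      iv (b st.1) * aert C1 X st + iv (~~ b st.1) * aert C2 X st
  | Seq C1 C2 => aert C1 (aert C2 X)
  | While b C1 => lfpA (fun Y st => iv (~~ b st.1) * X st + iv (b st.1) * aert C1 Y st)
  | _ =>
      fun st => ert C (fun st' => X st' + (pi st')%:E) st - (pi st)%:E
  end.

End Amortized.
End Runtimes.

(* Main.v *)
Require Import Defs.
From HB Require Import structures.
From mathcomp Require Import all_boot all_order all_algebra.
From mathcomp Require Import all_classical all_reals ereal.
Import Order.TTheory GRing.Theory Num.Theory.
Local Open Scope classical_set_scope.
Local Open Scope ring_scope.
Local Open Scope ereal_scope.
Section H.
Context {R : realType} {V : finType}.

Lemma tsub_ge0 (a b : \bar R) : 0 <= tsub a b.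
Proof.
rewrite /tsub; case: ifP => // _; case: ifP => // _; case: ifP => // /negbT.
by rewrite -leNgt.
Qed.

Lemma tsub_le0 (a b : \bar R) : a <= b -> tsub a b <= 0.
Proof.
rewrite /tsub; case: eqP => // hb; case: eqP => [ha|ha].
  by move=> hab; move: hab; rewrite ha leye_eq => /eqP.
case: ifP => // _.
case: b hb => [r| |] // _; case: a ha => [a| |] // _.
- by move=> ?; rewrite -EFinB lee_fin subr_le0.
- by move=> _; rewrite leNye.
- by move=> _; rewrite leNye.
Qed.

Lemma tsub_mono (a a' b : \bar R) : a <= a' -> tsub a b <= tsub a' b.
Proof.
move=> aa'; rewrite /tsub; case: eqP => // _.
case: eqP => [ha|ha].
  have Ea' : a' = +oo by move: aa'; rewrite ha leye_eq => /eqP.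
  by case: eqP.
case: eqP => [_|ha']; first exact: leey.
case: ifP => h1; first by case: ifP => // /negbT; rewrite -leNgt.
case: ifP => h2; last by apply: leeD2r.
have : a - b < 0 by apply: le_lt_trans h2; apply: leeD2r.
by rewrite h1.
Qed.

Lemma heap_ext (h1 h2 : heap) : hval h1 =1 hval h2 -> h1 = h2.
Proof.
case: h1 h2 => [v1 p1 q1] [v2 p2 q2] /= /funext E; subst.
congr Heap; exact: Prop_irrelevance.
Qed.

Definition hemp : heap := @Heap (fun _ => None) erefl (ex_intro _ 0%N (fun _ _ => erefl)).

Lemma hsplit_r0 h : hsplit h h hemp.
Proof. by split => l; [right|rewrite /=; case: (hval h l)]. Qed.

Lemma hsplit_emp h h' h'' : hempty h -> hsplit h'' h h' -> h'' = h'.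
Proof. by move=> He [_ Hs]; apply: heap_ext => l; rewrite Hs He. Qed.

Lemma hempty_hemp : hempty hemp. Proof. by []. Qed.

Implicit Types f g : rt (R:=R) (V:=V).

Lemma sepcon_le f g s h h1 h2 : hsplit h h1 h2 ->
  sepcon f g (s, h) <= f (s, h1) + g (s, h2).
Proof. by move=> Hs; apply: ge_ereal_inf; exists (f (s, h1) + g (s, h2)) => //; exists h1, h2. Qed.

Lemma sepcon_ge0 f g : (forall st, 0 <= f st) -> (forall st, 0 <= g st) ->
  forall st, 0 <= sepcon f g st.
Proof.
move=> f0 g0 st; apply: le_ereal_inf_tmp => r [h1 [h2 [_ ->]]].
exact: adde_ge0.
Qed.

Lemma sepcon_mono f1 f2 g1 g2 : rle f1 f2 -> rle g1 g2 ->
  rle (sepcon f1 g1) (sepcon f2 g2).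
Proof.
move=> F G [s h]; apply: le_ereal_inf_tmp => r [h1 [h2 [Hs ->]]].
apply: le_trans; first exact: (sepcon_le _ _ _ _ _ _ Hs). exact: leeD.
Qed.

Lemma sepcon_loc f1 f2 g1 g2 s1 s2 :
  (forall h, f1 (s1, h) = f2 (s2, h)) -> (forall h, g1 (s1, h) = g2 (s2, h)) ->
  forall h, sepcon f1 g1 (s1, h) = sepcon f2 g2 (s2, h).
Proof.
move=> F G h; rewrite /sepcon /=; congr ereal_inf; apply/funext => r.
by apply/propext; split => -[h1 [h2 [Hs ->]]]; exists h1, h2; rewrite F G.
Qed.

Lemma septo_ge0 f g st : 0 <= septo f g st.
Proof.
apply: le_ereal_sup_tmp; exists (tsub (g (st.1, st.2)) (f (st.1, hemp))).
  by exists hemp, st.2; split => //; apply: hsplit_r0.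
exact: tsub_ge0.
Qed.

Lemma septo_mono f g1 g2 : rle g1 g2 -> rle (septo f g1) (septo f g2).
Proof.
move=> G [s h]; apply: ge_ereal_sup => r [h' [h'' [Hs ->]]].
apply: le_ereal_sup_tmp; exists (tsub (g2 (s, h'')) (f (s, h'))).
  by exists h', h''.
exact: tsub_mono.
Qed.

Lemma septo_loc f1 f2 g1 g2 s1 s2 :
  (forall h, f1 (s1, h) = f2 (s2, h)) -> (forall h, g1 (s1, h) = g2 (s2, h)) ->
  forall h, septo f1 g1 (s1, h) = septo f2 g2 (s2, h).
Proof.
move=> F G h; rewrite /septo /=; congr ereal_sup; apply/funext => r.
by apply/propext; split => -[h1 [h2 [Hs ->]]]; exists h1, h2; rewrite F G.
Qed.

Lemma septo_le0 f g s h :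
  (forall h' h'', hsplit h'' h h' -> tsub (g (s, h'')) (f (s, h')) <= 0) ->
  septo f g (s, h) <= 0.
Proof. by move=> H; apply: ge_ereal_sup => r [h' [h'' [Hs ->]]]; apply: H. Qed.


Lemma upd_same (s : stack V) x v : upd s x v x = v.
Proof. by rewrite /upd eqxx. Qed.

Lemma upd_upd (s : stack V) x v w : upd (upd s x v) x w = upd s x w.
Proof. by apply: funext => z; rewrite /upd; case: eqP. Qed.

Lemma upd_comm (s : stack V) x y v w : x <> y ->
  upd (upd s x v) y w = upd (upd s y w) x v.
Proof.
move=> xy; apply: funext => z; rewrite /upd.
case: eqP => [zy|zy]; case: eqP => [zx|zx] //; by case: xy; rewrite -zx -zy.
Qed.

Lemma upd_id (s : stack V) x : upd s x (s x) = s.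
Proof. by apply: funext => z; rewrite /upd; case: eqP => [->|]. Qed.

Lemma pto_loc (e e' : aexp V) s1 s2 : e s1 = e s2 -> e' s1 = e' s2 ->
  forall h, pto (R:=R) e e' (s1, h) = pto e e' (s2, h).
Proof. by move=> E E' h; rewrite /pto /atom /= E E'. Qed.

Lemma pto_any_loc (e : aexp V) s1 s2 : e s1 = e s2 ->
  forall h, pto_any (R:=R) e (s1, h) = pto_any e (s2, h).
Proof. by move=> E h; rewrite /pto_any /atom /= E. Qed.

Lemma bigsep_loc n (G1 G2 : nat -> rt (R:=R) (V:=V)) s1 s2 :
  (forall i h, G1 i (s1, h) = G2 i (s2, h)) ->
  forall h, bigsep n G1 (s1, h) = bigsep n G2 (s2, h).
Proof.
move=> G; elim: n => [|n IH] h //=.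
by apply: sepcon_loc => // h'; apply: G.
Qed.

Definition inv (y : V) (F : rt (R:=R) (V:=V)) :=
  forall s v h, F (upd s y v, h) = F (s, h).

Definition atomic (C : cmd V) : Prop :=
  match C with
  | Tick _ | PChoice _ _ _ | Ite _ _ _ | Seq _ _ | While _ _ => False
  | _ => True end.

Lemma ert_mono_at C (F G : rt (R:=R) (V:=V)) : atomic C -> rle F G -> rle (ert C F) (ert C G).
Proof.
case: C => //= [x e|x e|e e'|x e|e] _ FG.
- by move=> [s h]; rewrite /subst_rt; apply: FG.
- move=> st; apply: ge_ereal_sup => r [v _ <-].
  apply: le_ereal_sup_tmp; eexists; first by exists v.
  by apply: septo_mono => st'; rewrite /subst_rt; apply: FG.
- by apply: sepcon_mono => //; apply: septo_mono.
- move=> st; apply: le_ereal_inf_tmp => r [v _ <-].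
  apply: ge_ereal_inf; eexists; first by exists v.
  apply: sepcon_mono => //; apply: septo_mono => st'; rewrite /subst_rt; apply: FG.
- by apply: sepcon_mono.
Qed.

Lemma ert_inv_at C y (F : rt (R:=R) (V:=V)) : atomic C -> notin_cmd y C -> inv y F -> inv y (ert C F).
Proof.
case: C => //= [x e|x e|e e'|x e|e] _.
- move=> [xy ey] FI s v h; rewrite /subst_rt /= ey (upd_comm _ _ _ _ _ (nesym xy)); exact: FI.
- move=> [xy ey] FI s v h; congr ereal_sup; congr image; apply: funext => w.
  apply: septo_loc => h'.
    by rewrite /sepsum /= ey; apply: bigsep_loc.
  by rewrite /subst_rt /= (upd_comm _ _ _ _ _ (nesym xy)); apply: FI.
- move=> [ey ey'] FI s v h; apply: sepcon_loc => h'; first exact: pto_any_loc.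
  by apply: septo_loc => h''; [apply: pto_loc|apply: FI].
- move=> [xy ey] FI s v h; congr ereal_inf; congr image; apply: funext => w.
  apply: sepcon_loc => h'; first exact: pto_loc.
  apply: septo_loc => h''; first exact: pto_loc.
  by rewrite /subst_rt /= (upd_comm _ _ _ _ _ (nesym xy)); apply: FI.
- move=> ey FI s v h; apply: sepcon_loc => h'; first exact: pto_any_loc.
  exact: FI.
Qed.

Lemma inf_var_inv y (f : rt (R:=R) (V:=V)) : inv y (inf_var y f).
Proof.
move=> s v h; rewrite /inf_var /=; congr ereal_inf; congr image.
by apply: funext => w; rewrite upd_upd.
Qed.

Lemma inf_var_le y (f : rt (R:=R) (V:=V)) : rle (inf_var y f) f.
Proof.
move=> [s h]; apply: ge_ereal_inf; exists (f (upd s y (s y), h)).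
  by exists (s y).
by rewrite upd_id.
Qed.

Lemma finN (p : R) : - (p%:E) \is a fin_num.
Proof. by []. Qed.

Lemma atomic_aux (E : rt (R:=R) (V:=V) -> rt) y (pi : state V -> R)
  (Emono : forall F G, rle F G -> rle (E F) (E G))
  (Einv : forall F, inv y F -> inv y (E F)) f g :
  rle (fun st => E (fun st' => minus_pi pi f st' + (pi st')%:E) st - (pi st)%:E)
      (minus_pi pi g) ->
  rle (fun st => E (fun st' => (- (pi st')%:E + inf_var y f st') + (pi st')%:E) st
                 - (pi st)%:E)
      (fun st => - (pi st)%:E + inf_var y g st).
Proof.
have e1 : (fun st' => minus_pi pi f st' + (pi st')%:E) = f.
  by apply: funext => st'; rewrite /minus_pi subeK.
have e2 : (fun st' => (- (pi st')%:E + inf_var y f st') + (pi st')%:E) = inf_var y f.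
  by apply: funext => st'; rewrite [- _ + _]addeC subeK.
rewrite e1 e2 => H [s h].
have H' : forall st, E f st <= g st.
  by move=> st; have := H st; rewrite /minus_pi leeD2rE.
rewrite [- _ + _]addeC; apply: leeD2r.
apply: le_ereal_inf_tmp => r [v _ <-].
apply: le_trans (H' _); rewrite -(Einv _ (@inf_var_inv y f) s v h).
exact: Emono (@inf_var_le y f) _.
Qed.


Lemma shift0 (x : \bar R) (p : R) : (- p%:E <= x) = (0 <= x + p%:E).
Proof. by rewrite -(leeD2rE (x:=p%:E)) // -EFinN -EFinD addNr. Qed.

Lemma comb_le (c p : R) (B1 B2 I1 I2 : \bar R) : (0 <= c)%R -> (c <= 1)%R ->
  B1 <= - p%:E + I1 -> B2 <= - p%:E + I2 ->
  c%:E * B1 + (1 - c)%:E * B2 <= - p%:E + (c%:E * I1 + (1 - c)%:E * I2).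
Proof.
move=> c0 c1 H1 H2.
have c1' : (0 <= 1 - c)%R by rewrite subr_ge0.
apply: le_trans (leeD (lee_wpmul2l _ H1) (lee_wpmul2l _ H2)) _; rewrite ?lee_fin //.
rewrite !muleDr ?fin_num_adde_defr // addeACA -!EFinN -!EFinM -EFinD.
by rewrite -mulrDl (addrC c) subrK mul1r.
Qed.

Lemma comb_le2 (c p : R) (A1 A2 G : \bar R) : (0 <= c)%R -> (c <= 1)%R ->
  c%:E * A1 + (1 - c)%:E * A2 <= G - p%:E ->
  c%:E * (A1 + p%:E) + (1 - c)%:E * (A2 + p%:E) <= G.
Proof.
move=> c0 c1 H.
rewrite !muleDr ?fin_num_adde_defl // addeACA -!EFinM -EFinD.
rewrite -mulrDl (addrC c) subrK mul1r.
by apply: le_trans (leeD2r p%:E H) _; rewrite subeK.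
Qed.

Lemma atom_ge0 (P : state V -> Prop) st : 0 <= atom (R:=R) P st.
Proof. by rewrite /atom; case: asboolP. Qed.

Lemma ert_ge0_at C (F : rt (R:=R) (V:=V)) : atomic C -> (forall st, 0 <= F st) ->
  forall st, 0 <= ert C F st.
Proof.
case: C => //= [x e|x e|e e'|x e|e] _ F0 st.
- exact: F0.
- apply: le_ereal_sup_tmp; eexists; first by exists 0%N.
  exact: septo_ge0.
- by apply: sepcon_ge0 => st'; [apply: atom_ge0|apply: septo_ge0].
- apply: le_ereal_inf_tmp => r [v _ <-].
  by apply: sepcon_ge0 => st'; [apply: atom_ge0|apply: septo_ge0].
- by apply: sepcon_ge0 => // st'; apply: atom_ge0.
Qed.

End H.

Section A.
Context {R : realType} {V : finType} (pi : state V -> R).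

Lemma aert_at C (X : rt (R:=R) (V:=V)) : atomic C ->
  aert pi C X = fun st => ert C (fun st' => X st' + (pi st')%:E) st - (pi st)%:E.
Proof. by case: C. Qed.

Lemma ratr_ge0 (p : pexp V) s : (0 <= ratr (pfun p s) :> R)%R.
Proof. by rewrite ler0q pfun_ge0. Qed.

Lemma ratr_le1 (p : pexp V) s : (ratr (pfun p s) <= 1 :> R)%R.
Proof. by rewrite -(rmorph1 (ratr : {rmorphism rat -> R})) ler_rat pfun_le1. Qed.

Lemma iv_ge0 b : 0 <= iv (R:=R) b.
Proof. by case: b; rewrite /iv. Qed.

Lemma aert_ge C (X : rt (R:=R) (V:=V)) : (forall st, - (pi st)%:E <= X st) ->
  forall st, - (pi st)%:E <= aert pi C X st.
Proof.
elim: C X => [e|x e|x e|e e'|x e|e|C1 IH1 p C2 IH2|b C1 IH1 C2 IH2|C1 IH1 C2 IH2|b C1 IH1] X HX st;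
  try (rewrite aert_at //; rewrite -[X in X <= _]add0e; apply: leeD2r;
       apply: ert_ge0_at => // st'; rewrite -shift0; exact: HX).
- apply: le_trans (HX st) _; rewrite /=; apply: leeDr; by rewrite lee_fin.
- rewrite /=.
  have E : (ratr (pfun p st.1))%:E * - (pi st)%:E +
       (1 - ratr (pfun p st.1))%:E * - (pi st)%:E = - (pi st)%:E.
    by rewrite -!EFinN -!EFinM -EFinD -mulrDl (addrC (ratr _)) subrK mul1r.
  apply: le_trans (_ : - (pi st)%:E <= (ratr (pfun p st.1))%:E * - (pi st)%:E +
       (1 - ratr (pfun p st.1))%:E * - (pi st)%:E) _; first by rewrite E.
  apply: leeD; apply: lee_wpmul2l; rewrite ?lee_fin ?subr_ge0 ?ratr_ge0 ?ratr_le1 //.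
  exact: IH1. exact: IH2.
- rewrite /=; case: (b st.1); rewrite /iv ?mul1e ?mul0e ?adde0 ?add0e; [exact: IH1|exact: IH2].
- by apply: IH1 => st'; apply: IH2.
- by apply: le_ereal_inf_tmp => r [Y [HY _] <-].
Qed.

Lemma aert_mono C (X X' : rt (R:=R) (V:=V)) : rle X X' -> rle (aert pi C X) (aert pi C X').
Proof.
elim: C X X' => [e|x e|x e|e e'|x e|e|C1 IH1 p C2 IH2|b C1 IH1 C2 IH2|C1 IH1 C2 IH2|b C1 IH1] X X' HX st;
  try (rewrite !aert_at //; apply: leeD2r; apply: ert_mono_at => // st'; apply: leeD2r; exact: HX).
- by rewrite /=; apply: leeD2l.
- rewrite /=; apply: leeD; apply: lee_wpmul2l; rewrite ?lee_fin ?subr_ge0 ?ratr_ge0 ?ratr_le1 //.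
  exact: IH1. exact: IH2.
- by rewrite /=; apply: leeD; apply: lee_wpmul2l; rewrite ?iv_ge0 //; [apply: IH1|apply: IH2].
- by apply: IH1; apply: IH2.
- rewrite /=; apply: ereal_inf_le_tmp => r [Y [HY HP] <-]; exists Y => //; split => // st'.
  apply: le_trans (HP st'); apply: leeD2r; apply: lee_wpmul2l; rewrite ?iv_ge0 //.
Qed.


Lemma lfpA_ge (Phi : rt (R:=R) (V:=V) -> rt) st : - (pi st)%:E <= lfpA pi Phi st.
Proof. by apply: le_ereal_inf_tmp => r [Y [HY _] <-]. Qed.

Lemma lfpA_lb (Phi : rt (R:=R) (V:=V) -> rt) Y :
  (forall st, - (pi st)%:E <= Y st) -> rle (Phi Y) Y -> rle (lfpA pi Phi) Y.
Proof. by move=> HY HP st; apply: ge_ereal_inf; exists (Y st) => //; exists Y. Qed.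

Lemma lfpA_fix (Phi : rt (R:=R) (V:=V) -> rt) :
  (forall Y Y', rle Y Y' -> rle (Phi Y) (Phi Y')) -> rle (Phi (lfpA pi Phi)) (lfpA pi Phi).
Proof.
move=> Pm st; apply: le_ereal_inf_tmp => r [Y [HY HP] <-].
apply: le_trans (HP st); exact: (Pm _ _ (lfpA_lb _ _ HY HP) st).
Qed.

Lemma minus_pi_plus (A : rt (R:=R) (V:=V)) :
  minus_pi pi (fun st => A st + (pi st)%:E) = A.
Proof. by apply: funext => st; rewrite /minus_pi addeK. Qed.

Lemma minus_pi_ge (f : rt (R:=R) (V:=V)) : (forall st, 0 <= f st) ->
  forall st, - (pi st)%:E <= minus_pi pi f st.
Proof. by move=> f0 st; rewrite shift0 /minus_pi subeK. Qed.

Lemma inf_le_at y (h1 g : rt (R:=R) (V:=V)) s h :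
  (forall v, h1 (upd s y v, h) <= g (upd s y v, h)) ->
  inf_var y h1 (s, h) <= inf_var y g (s, h).
Proof.
move=> H; apply: le_ereal_inf_tmp => r [v _ <-].
rewrite -(inf_var_inv y h1 s v h); apply: le_trans (inf_var_le y h1 _) _.
exact: H.
Qed.

Lemma aux C y (f g : rt (R:=R) (V:=V)) :
  (forall st, 0 <= f st) -> (forall st, 0 <= g st) -> notin_cmd y C ->
  rle (aert pi C (minus_pi pi f)) (minus_pi pi g) ->
  rle (aert pi C (fun st => - (pi st)%:E + inf_var y f st))
      (fun st => - (pi st)%:E + inf_var y g st).
Proof.
elim: C f g => [e|x e|x e|e e'|x e|e|C1 IH1 p C2 IH2|b C1 IH1 C2 IH2|C1 IH1 C2 IH2|b C1 IH1] f g f0 g0 Hn H;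
  try (move: H; rewrite !aert_at // => H;
       apply: (@atomic_aux _ _ (ert _)) H;
       [ by move=> F G; apply: ert_mono_at
       | by move=> F; apply: ert_inv_at ]).
-
  move=> [s h] /=.
  have H' : forall st, ((e st.1)%:R)%:E + f st <= g st.
    by move=> st; have := H st; rewrite /= /minus_pi addeA leeD2rE.
  rewrite addeCA; apply: leeD2l.
  apply: le_ereal_inf_tmp => r [v _ <-].
  apply: le_trans (H' (upd s y v, h)); rewrite /= Hn; apply: leeD2l.
  rewrite -(inf_var_inv y f s v h); exact: inf_var_le.
-
  case: Hn => n1 [np n2] [s h] /=.
  pose h1 := fun st => aert pi C1 (minus_pi pi f) st + (pi st)%:E.
  pose h2 := fun st => aert pi C2 (minus_pi pi f) st + (pi st)%:E.
  have h10 : forall st, 0 <= h1 st.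
    by move=> st; rewrite /h1 -shift0; apply: aert_ge; apply: minus_pi_ge.
  have h20 : forall st, 0 <= h2 st.
    by move=> st; rewrite /h2 -shift0; apply: aert_ge; apply: minus_pi_ge.
  have K1 := IH1 f h1 f0 h10 n1 (ltac:(by rewrite minus_pi_plus)) (s, h).
  have K2 := IH2 f h2 f0 h20 n2 (ltac:(by rewrite minus_pi_plus)) (s, h).
apply: le_trans (comb_le _ _ _ _ _ _ (ratr_ge0 p s) (ratr_le1 p s) K1 K2) _.
  apply: leeD2l; apply: le_ereal_inf_tmp => r [v _ <-].
  rewrite -(inf_var_inv y h1 s v h) -(inf_var_inv y h2 s v h).
  have c0 := ratr_ge0 p s; have c1 := ratr_le1 p s.
  apply: le_trans (leeD (lee_wpmul2l _ (inf_var_le y h1 _)) (lee_wpmul2l _ (inf_var_le y h2 _))) _;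
    rewrite ?lee_fin ?subr_ge0 //.
  rewrite /h1 /h2; apply: comb_le2 => //.
  by have := H (upd s y v, h); rewrite /= np.
-
  case: Hn => nb [n1 n2] [s h] /=.
  pose h1 := fun st => aert pi C1 (minus_pi pi f) st + (pi st)%:E.
  pose h2 := fun st => aert pi C2 (minus_pi pi f) st + (pi st)%:E.
  have h10 : forall st, 0 <= h1 st.
    by move=> st; rewrite /h1 -shift0; apply: aert_ge; apply: minus_pi_ge.
  have h20 : forall st, 0 <= h2 st.
    by move=> st; rewrite /h2 -shift0; apply: aert_ge; apply: minus_pi_ge.
  have K1 := IH1 f h1 f0 h10 n1 (ltac:(by rewrite minus_pi_plus)) (s, h).
  have K2 := IH2 f h2 f0 h20 n2 (ltac:(by rewrite minus_pi_plus)) (s, h).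
  case Eb: (b s); rewrite /iv /= ?mul1e ?mul0e ?adde0 ?add0e.
  + apply: le_trans K1 _; apply: leeD2l; apply: inf_le_at => v.
    have := H (upd s y v, h); rewrite /= nb Eb /iv mul1e mul0e adde0 => Hv.
    by apply: le_trans (leeD2r _ Hv) _; rewrite subeK.
  + apply: le_trans K2 _; apply: leeD2l; apply: inf_le_at => v.
    have := H (upd s y v, h); rewrite /= nb Eb /iv mul1e mul0e add0e => Hv.
    by apply: le_trans (leeD2r _ Hv) _; rewrite subeK.
-
  case: Hn => n1 n2 st; change (aert pi C1 (aert pi C2 (fun st => - (pi st)%:E + inf_var y f st)) st <= - (pi st)%:E + inf_var y g st).
  pose h2 := fun st => aert pi C2 (minus_pi pi f) st + (pi st)%:E.
  have h20 : forall st, 0 <= h2 st.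
    by move=> st'; rewrite /h2 -shift0; apply: aert_ge; apply: minus_pi_ge.
  have K2 := IH2 f h2 f0 h20 n2 (ltac:(by rewrite minus_pi_plus)).
  apply: le_trans (aert_mono C1 _ _ K2 st) _.
  apply: IH1 => //.
  by rewrite /h2 minus_pi_plus.
-
  case: Hn => nb n1.
  set Phi := (fun Y st => iv (~~ b st.1) * minus_pi pi f st + iv (b st.1) * aert pi C1 Y st).
  have Pm : forall Y Y', rle Y Y' -> rle (Phi Y) (Phi Y').
    move=> Y Y' HY st; rewrite /Phi; apply: leeD2l; apply: lee_wpmul2l; rewrite ?iv_ge0 //.
    exact: aert_mono.
  set L := lfpA pi Phi.
  have LF := lfpA_fix _ Pm; rewrite -/L in LF.
  pose hL := fun st => L st + (pi st)%:E.
  have hL0 : forall st, 0 <= hL st by move=> st; rewrite /hL -shift0; apply: lfpA_ge.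
  pose g' := fun st : state V => if b st.1 then hL st else +oo.
  have g'0 : forall st, 0 <= g' st by move=> st; rewrite /g'; case: (b st.1).
  have K := IH1 hL g' hL0 g'0 n1.
  have K' : rle (aert pi C1 (fun st => - (pi st)%:E + inf_var y hL st))
                (fun st => - (pi st)%:E + inf_var y g' st).
    apply: K; rewrite /hL minus_pi_plus => st.
    rewrite /minus_pi /g'; case Eb: (b st.1); last by rewrite /= leey.
    rewrite /hL addeK //; have := LF st; rewrite /Phi Eb /iv mul0e mul1e add0e //.
  have HL : rle hL g.
    move=> st; rewrite /hL; apply: le_trans (leeD2r _ (H st)) _; rewrite /minus_pi subeK //.
  move=> [s h].
  apply: le_trans (lfpA_lb _ (fun st => - (pi st)%:E + inf_var y hL st) _ _ (s, h)) _.
  + move=> st; rewrite -[X in X <= _]adde0; apply: leeD2l.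
    by apply: le_ereal_inf_tmp => r [v _ <-].
  + move=> [s' h'] /=; case Eb: (b s'); rewrite /iv /= ?mul1e ?mul0e ?adde0 ?add0e.
    * apply: le_trans (K' (s', h')) _; apply: leeD2l; apply: inf_le_at => v.
      by rewrite /g' /= nb Eb.
    * apply: leeD2l; apply: inf_le_at => v.
      have := LF (upd s' y v, h'); rewrite /Phi /= nb Eb /iv mul1e mul0e adde0 => Hv.
      by have := leeD2r (pi (upd s' y v, h'))%:E Hv; rewrite /minus_pi subeK.
  + by apply: leeD2l; apply: inf_le_at => v; apply: HL.
Qed.



Lemma minus_pi_plus2 (F : rt (R:=R) (V:=V)) :
  (fun st => minus_pi pi F st + (pi st)%:E) = F.
Proof. by apply: funext => st; rewrite /minus_pi subeK. Qed.

Lemma le_of_eq (a b : \bar R) : a = b -> a <= b.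
Proof. by move->. Qed.

Lemma tsub_y (a : \bar R) : tsub a +oo = 0.
Proof. by rewrite /tsub; case: eqP. Qed.

Lemma hsplit_0l h : hsplit h hemp h.
Proof. by split => l; [left|]. Qed.

Lemma mut (e e' : aexp V) :
  rle (aert pi (Store e e') (minus_pi pi (pto e e'))) (minus_pi pi (pto_any e)).
Proof.
rewrite aert_at // minus_pi_plus2 => -[s h]; rewrite /minus_pi; apply: leeD2r.
apply: le_trans (sepcon_le _ _ _ _ _ _ (hsplit_r0 h)) _.
rewrite -[X in _ <= X]adde0; apply: leeD2l.
apply: septo_le0 => h' h'' Hs; rewrite (hsplit_emp _ _ _ hempty_hemp Hs).
exact: tsub_le0.
Qed.

Lemma alc (x : V) (e : aexp V) : a_indep x e ->
  rle (aert pi (Alloc x e)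
         (minus_pi pi (sepsum e (fun i => pto (fun s => (s x + i - 1)%N) (fun _ => 0%N)))))
      (minus_pi pi (@emp R V)).
Proof.
move=> Hx; rewrite aert_at // minus_pi_plus2 => -[s h]; rewrite /minus_pi; apply: leeD2r.
rewrite /emp /atom; case: asboolP => [He|_]; last exact: leey.
apply: ge_ereal_sup => r [v _ <-].
apply: septo_le0 => h' h'' Hs; rewrite (hsplit_emp _ _ _ He Hs).
apply: tsub_le0; apply: le_of_eq.
rewrite /subst_rt /sepsum /= Hx; apply: bigsep_loc => i h0. rewrite /pto /atom /=.
by rewrite upd_same.
Qed.

Lemma inf_img_le (F : nat -> \bar R) v x : F v <= x ->
  ereal_inf [set F w | w in [set: nat]] <= x.
Proof. by move=> H; apply: ge_ereal_inf; exists (F v) => //; exists v. Qed.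

Lemma addy_atom (P : state V -> Prop) st : +oo + atom (R:=R) P st = +oo.
Proof. by rewrite /atom; case: asboolP => _; rewrite ?adde0. Qed.

Lemma lkp (x y z : V) (e : aexp V) : x <> y ->
  rle (aert pi (Lookup x e)
         (minus_pi pi (sepcon (andemp (fun s => s x == s z))
                              (pto (asubst e x y) (fun s => s z)))))
      (minus_pi pi (sepcon (andemp (fun s => s x == s y))
                           (pto e (fun s => s z)))).
Proof.
move=> xy; rewrite aert_at // minus_pi_plus2 => -[s h]; rewrite /minus_pi; apply: leeD2r.
apply: le_ereal_inf_tmp => r [h1 [h2 [Hs ->]]].
rewrite [andemp _ _]/andemp [pto _ _ _]/pto /= /atom.
case: (asboolP ((s x == s y) /\ hempty h1)) => [[/eqP Exy He1]|_]; last first.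
  by case: asboolP => _; rewrite ?adde0 leey.
case: (asboolP (forall l, hval h2 l = if l == e s then Some (s z) else None)) => [Hpto|_]; last first.
  by rewrite add0e leey.
rewrite adde0.
apply: (inf_img_le _ (s z)).
apply: le_trans (sepcon_le _ _ _ _ _ _ (hsplit_r0 h)) _.
rewrite -[X in _ <= X]adde0; apply: leeD.
  apply: le_of_eq; rewrite /pto /atom asboolT // => l /=.
  by rewrite Hs.2 He1 Hpto.
apply: septo_le0 => h' h'' Hs'; rewrite (hsplit_emp _ _ _ hempty_hemp Hs').
rewrite {2}/pto {1}/atom; case: asboolP => [/= Hp|_]; last by rewrite tsub_y.
apply: tsub_le0; rewrite /subst_rt /=.
apply: le_trans (sepcon_le _ _ _ _ _ _ (hsplit_0l h')) _.
have Ez : upd s x (s z) z = s z by rewrite /upd; case: (_ == _).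
rewrite -[X in _ <= X]adde0; apply: leeD; apply: le_of_eq; rewrite ?/andemp /pto /atom asboolT //=.
  by rewrite upd_same Ez.
move=> l; rewrite Hp Ez /asubst upd_upd.
have -> : upd s x (s z) y = s y.
  by rewrite /upd; case: eqP => // yx; case: xy.
by rewrite -Exy upd_id.
Qed.

End A.

Theorem mainTheorem11 (R : realType) (V : finType) (pi : state V -> R)
  (pi_ge0 : forall st, (0 <= pi st)%R) :
  (* (1) mut *)
  (forall e e' : aexp V,
     rle (aert pi (Store e e') (minus_pi pi (pto e e')))
         (minus_pi pi (pto_any e))) /\
  (* (2) lkp *)
  (forall (x y z : V) (e : aexp V), x <> y ->
     rle (aert pi (Lookup x e)
            (minus_pi pi (sepcon (andemp (fun s => s x == s z))
                                 (pto (asubst e x y) (fun s => s z)))))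
         (minus_pi pi (sepcon (andemp (fun s => s x == s y))
                              (pto e (fun s => s z))))) /\
  (* (3) alc *)
  (forall (x : V) (e : aexp V), a_indep x e ->
     rle (aert pi (Alloc x e)
            (minus_pi pi (sepsum e (fun i => pto (fun s => (s x + i - 1)%N) (fun _ => 0%N)))))
         (minus_pi pi (@emp R V))) /\
  (* (4) aux *)
  (forall (C : cmd V) (f g : state V -> \bar R) (y : V),
     (forall st, 0 <= f st) -> (forall st, 0 <= g st) ->
     notin_cmd y C ->
     rle (aert pi C (minus_pi pi f)) (minus_pi pi g) ->
     rle (aert pi C (fun st => - (pi st)%:E + inf_var y f st))
         (fun st => - (pi st)%:E + inf_var y g st)).
Proof.
split; first exact: mut.
split; first exact: lkp.
split; first exact: alc.
by move=> C f g y; apply: aux.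
Qed.
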